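(* The equational theory of $\mathbf{W}$ is decidable if, and only if, there exists an algorithm that decides, for any basic terms $t_1,\dots,t_n$, whether $\mathbf{W}\models 1\le t_1\vee\cdots\vee t_n$.
   Context: Let $\omega^+=\omega\cup\{\omega\}$. A time warp is a join-preserving map $\omega^+\to\omega^+$; $W$ is the set of time warps ordered pointwise; $p(m)=\bigvee\{k\in\omega\mid k<m\}$; $f\backslash g$ is the largest time warp $h$ with $f\circ h\le g$. $\mathbf{W}=\langle W,\wedge,\vee,\circ,{}^\star,\mathrm{id}\rangle$ with pointwise meet/join, composition, $f^\star:=f\backslash p$, identity. Terms are built from a countably infinite set of variables using $\wedge,\vee,\cdot,{}',1$, interpreted as $\wedge,\vee,\circ,{}^\star,\mathrm{id}$. A basic term is one built from variables using only $\cdot$, ${}'$, $1$. $\mathbf{W}\models s\le t$ means the value of $s$ is pointwise below that of $t$ under every assignment of time warps to the variables. *)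

(* Defs.v *)
From Stdlib Require Import List Arith PeanoNat ClassicalEpsilon.
Import ListNotations.

Inductive om : Type := Fin (n : nat) | Om.

Definition ole (x y : om) : Prop :=
  match x, y with
  | _, Om => True
  | Om, Fin _ => False
  | Fin a, Fin b => a <= b
  end.

Definition olt (x y : om) : Prop := ole x y /\ x <> y.

Definition is_lub (S : om -> Prop) (x : om) : Prop :=
  (forall y, S y -> ole y x) /\
  (forall z, (forall y, S y -> ole y z) -> ole x z).

(* the join of an arbitrary subset (always exists since omega^+ is complete) *)
Definition omsup (S : om -> Prop) : om :=
  epsilon (inhabits Om) (fun x => is_lub S x).

Definition omeet (x y : om) : om :=
  match x, y with
  | Om, y => y
  | x, Om => x
  | Fin a, Fin b => Fin (Nat.min a b)
  end.

Definition ojoin (x y : om) : om :=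
  match x, y with
  | Om, _ => Om
  | _, Om => Om
  | Fin a, Fin b => Fin (Nat.max a b)
  end.

Definition time_warp (f : om -> om) : Prop :=
  forall (S : om -> Prop) (x : om),
    is_lub S x -> is_lub (fun y => exists z, S z /\ y = f z) (f x).

Definition pmap (m : om) : om :=
  omsup (fun y => exists k, y = Fin k /\ olt (Fin k) m).

(* f \ g = the largest time warp h with f o h <= g, realised as the pointwise
   join of all such h (which is that largest time warp). *)
Definition resid (f g : om -> om) (x : om) : om :=
  omsup (fun y => exists h, time_warp h /\
                       (forall z, ole (f (h z)) (g z)) /\ y = h x).

Definition wstar (f : om -> om) : om -> om := resid f pmap.

Inductive term : Type :=
| TVar  (i : nat)
| TMeet (s t : term)
| TJoin (s t : term)
| TMul  (s t : term)
| TStar (s : term)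
| TOne.

Fixpoint teval (sigma : nat -> om -> om) (t : term) : om -> om :=
  match t with
  | TVar i => sigma i
  | TMeet s u => fun x => omeet (teval sigma s x) (teval sigma u x)
  | TJoin s u => fun x => ojoin (teval sigma s x) (teval sigma u x)
  | TMul s u => fun x => teval sigma s (teval sigma u x)
  | TStar s => wstar (teval sigma s)
  | TOne => fun x => x
  end.

Fixpoint is_basic (t : term) : Prop :=
  match t with
  | TVar _ => True
  | TMul s u => is_basic s /\ is_basic u
  | TStar s => is_basic s
  | TOne => True
  | TMeet _ _ => False
  | TJoin _ _ => False
  end.

Definition W_models_le (s t : term) : Prop :=
  forall sigma : nat -> om -> om, (forall i, time_warp (sigma i)) ->
    forall x, ole (teval sigma s x) (teval sigma t x).

Definition W_models_eq (s t : term) : Prop :=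
  forall sigma : nat -> om -> om, (forall i, time_warp (sigma i)) ->
    forall x, teval sigma s x = teval sigma t x.

Fixpoint bigjoin (t1 : term) (ts : list term) : term :=
  match ts with
  | [] => t1
  | t2 :: ts' => TJoin t1 (bigjoin t2 ts')
  end.

Inductive recf : Type :=
| RZero
| RSucc
| RProj (i : nat)
| RComp (f : recf) (gs : list recf)
| RPrec (f g : recf)
| RMu (f : recf).

Inductive reval : recf -> list nat -> nat -> Prop :=
| ev_zero v : reval RZero v 0
| ev_succ x v : reval RSucc (x :: v) (S x)
| ev_proj i v : reval (RProj i) v (nth i v 0)
| ev_comp f gs v ys y :
    revals gs v ys -> reval f ys y -> reval (RComp f gs) v y
| ev_prec0 f g v y : reval f v y -> reval (RPrec f g) (0 :: v) y
| ev_precS f g n v z y :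
    reval (RPrec f g) (n :: v) z -> reval g (n :: z :: v) y ->
    reval (RPrec f g) (S n :: v) y
| ev_mu f v n :
    reval f (n :: v) 0 ->
    (forall m, m < n -> exists k, reval f (m :: v) (S k)) ->
    reval (RMu f) v n
with revals : list recf -> list nat -> list nat -> Prop :=
| evs_nil v : revals [] v []
| evs_cons g gs v y ys :
    reval g v y -> revals gs v ys -> revals (g :: gs) v (y :: ys).

Definition comp_decidable {T : Type} (enc : T -> nat) (D P : T -> Prop) : Prop :=
  exists c : recf, forall x, D x ->
    (P x -> reval c [enc x] 1) /\ (~ P x -> reval c [enc x] 0).

Definition cpair (a b : nat) : nat := (a + b) * (a + b + 1) / 2 + b.

Fixpoint enc_term (t : term) : nat :=
  match t with
  | TVar i => cpair 0 i
  | TMeet s u => cpair 1 (cpair (enc_term s) (enc_term u))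
  | TJoin s u => cpair 2 (cpair (enc_term s) (enc_term u))
  | TMul s u => cpair 3 (cpair (enc_term s) (enc_term u))
  | TStar s => cpair 4 (enc_term s)
  | TOne => cpair 5 0
  end.

Fixpoint enc_list (l : list term) : nat :=
  match l with
  | [] => 0
  | t :: l' => S (cpair (enc_term t) (enc_list l'))
  end.

Definition enc_eqn (e : term * term) : nat := cpair (enc_term (fst e)) (enc_term (snd e)).

Definition enc_nelist (l : term * list term) : nat := cpair (enc_term (fst l)) (enc_list (snd l)).

(* Main.v *)
Require Import Defs.
From Stdlib Require Import List Arith Lia Classical PeanoNat ClassicalEpsilon.
Import ListNotations.

Lemma ole_refl x : ole x x. Proof. destruct x; simpl; auto. Qed.
Lemma ole_trans x y z : ole x y -> ole y z -> ole x z.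
Proof. destruct x, y, z; simpl; intros; auto; try lia; contradiction. Qed.
Lemma ole_antisym x y : ole x y -> ole y x -> x = y.
Proof. destruct x, y; simpl; intros; auto; try contradiction. f_equal; lia. Qed.
Lemma ole_total x y : ole x y \/ ole y x.
Proof. destruct x, y; simpl; auto. lia. Qed.
Lemma ole_bot x : ole (Fin 0) x. Proof. destruct x; simpl; auto; lia. Qed.
Lemma ole_top x : ole x Om. Proof. destruct x; simpl; auto. Qed.
Lemma ole_Fin_S a m : ole a (Fin m) <-> ~ ole (Fin (S m)) a.
Proof. destruct a; simpl; split; intros; try lia; tauto. Qed.
Lemma ole_meet z a b : ole z (omeet a b) <-> ole z a /\ ole z b.
Proof. destruct z, a, b; simpl; split; intros; try tauto; try lia. Qed.
Lemma ole_join a b z : ole (ojoin a b) z <-> ole a z /\ ole b z.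
Proof. destruct z, a, b; simpl; split; intros; try tauto; try lia. Qed.
Lemma meet_ole a b z : ole (omeet a b) z <-> ole a z \/ ole b z.
Proof. destruct z, a, b; simpl; split; intros; try tauto; try lia. Qed.
Lemma join_ole z a b : ole z (ojoin a b) <-> ole z a \/ ole z b.
Proof. destruct z, a, b; simpl; split; intros; try tauto; try lia. Qed.
Lemma all_Fin_Om a : (forall k, ole (Fin k) a) -> a = Om.
Proof. destruct a; auto. intros H. specialize (H (S n)). simpl in H. lia. Qed.

Lemma lub_unique P x y : is_lub P x -> is_lub P y -> x = y.
Proof. intros [Hx1 Hx2] [Hy1 Hy2]. apply ole_antisym; auto. Qed.

Lemma ex_lub P : exists x, is_lub P x.
Proof.
  assert (HB : forall n, (forall y, P y -> ole y (Fin n)) -> exists x, is_lub P x).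
  { induction n; intros Hb.
    - exists (Fin 0). split; auto. intros; apply ole_bot.
    - destruct (classic (P (Fin (S n)))) as [Hin|Hnin].
      + exists (Fin (S n)). split; auto.
      + apply IHn. intros y Hy. pose proof (Hb y Hy). destruct y; simpl in *; try contradiction.
        destruct (Nat.eq_dec n0 (S n)); [subst; contradiction|lia]. }
  destruct (classic (exists n, forall y, P y -> ole y (Fin n))) as [[n Hn]|Hn].
  - eauto.
  - exists Om. split. intros; apply ole_top. intros z Hz. destruct z; simpl; auto.
    exfalso; apply Hn; eauto.
Qed.

Lemma omsup_lub P : is_lub P (omsup P).
Proof. unfold omsup. apply epsilon_spec. apply ex_lub. Qed.
Lemma omsup_eq P x : is_lub P x -> omsup P = x.
Proof. intros; eapply lub_unique; eauto using omsup_lub. Qed.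
Lemma lub_equiv P Q x : (forall y, P y <-> Q y) -> is_lub P x -> is_lub Q x.
Proof. intros E [H1 H2]. split. intros y Hy; apply H1, E, Hy. intros z Hz; apply H2; intros y Hy; apply Hz, E, Hy. Qed.

Lemma tw_zero f : time_warp f -> f (Fin 0) = Fin 0.
Proof.
  intros H. assert (L: is_lub (fun _ => False) (Fin 0)) by (split; [tauto| intros; apply ole_bot]).
  destruct (H _ _ L) as [_ H2]. apply ole_antisym; [apply H2 | apply ole_bot]. intros y [z [[] _]].
Qed.
Lemma tw_mono f : time_warp f -> forall x y, ole x y -> ole (f x) (f y).
Proof.
  intros H x y Hxy. assert (L: is_lub (fun z => z = x \/ z = y) y).
  { split. intros z [->| ->]; auto using ole_refl. intros z Hz. apply Hz; auto. }
  destruct (H _ _ L) as [H1 _]. apply H1. exists x; auto.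
Qed.
Lemma lub_Fin : is_lub (fun z => exists n, z = Fin n) Om.
Proof.
  split. intros; apply ole_top. intros z Hz. destruct z; simpl; auto.
  specialize (Hz (Fin (S n)) (ex_intro _ _ eq_refl)). simpl in Hz. lia.
Qed.
Lemma tw_cont f : time_warp f -> forall w, (forall n, ole (f (Fin n)) w) -> ole (f Om) w.
Proof.
  intros H w Hw. destruct (H _ _ lub_Fin) as [_ H2]. apply H2. intros y [z [[n ->] ->]]. auto.
Qed.
Lemma tw_intro f : f (Fin 0) = Fin 0 -> (forall x y, ole x y -> ole (f x) (f y)) ->
  (forall w, (forall n, ole (f (Fin n)) w) -> ole (f Om) w) -> time_warp f.
Proof.
  intros H0 Hm Hc P x [Hx1 Hx2]. split.
  - intros y [z [Hz ->]]. apply Hm, Hx1, Hz.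
  - intros w Hw. destruct x as [[|k]|].
    + rewrite H0. apply ole_bot.
    + destruct (classic (P (Fin (S k)))) as [Hin|Hnin].
      * apply Hw. exists (Fin (S k)); auto.
      * exfalso. assert (ole (Fin (S k)) (Fin k)) as HH.
        { apply Hx2. intros y Hy. pose proof (Hx1 y Hy). destruct y; simpl in *; auto.
          destruct (Nat.eq_dec n (S k)). subst; contradiction. lia. }
        simpl in HH; lia.
    + apply Hc. intros n. destruct (classic (exists z, P z /\ ole (Fin n) z)) as [[z [Hz Hnz]]|Hno].
      * apply ole_trans with (f z). apply Hm, Hnz. apply Hw. exists z; auto.
      * exfalso. assert (ole Om (Fin n)) as HH.
        { apply Hx2. intros y Hy. destruct (ole_total y (Fin n)); auto. exfalso; apply Hno; eauto. }
        simpl in HH; auto.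
Qed.

Lemma tw_lub_Om f : time_warp f -> is_lub (fun y => exists n, y = f (Fin n)) (f Om).
Proof.
  intros H. split. intros y [n ->]. apply (tw_mono f H), ole_top.
  intros z Hz. apply tw_cont; auto. intros n; apply Hz; eauto.
Qed.

Lemma tw_id : time_warp (fun x => x).
Proof. apply tw_intro; auto. intros w Hw. rewrite (all_Fin_Om w Hw). apply ole_refl. Qed.

Lemma tw_bot : time_warp (fun _ => Fin 0).
Proof. apply tw_intro; auto; intros; apply ole_bot. Qed.

Lemma tw_comp f g : time_warp f -> time_warp g -> time_warp (fun x => f (g x)).
Proof.
  intros Hf Hg. apply tw_intro.
  - rewrite (tw_zero g Hg). apply tw_zero; auto.
  - intros x y H. apply (tw_mono f Hf), (tw_mono g Hg), H.
  - intros w Hw. destruct (Hf _ _ (tw_lub_Om g Hg)) as [_ H2]. apply H2.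
    intros y [z [[n ->] ->]]. auto.
Qed.

Lemma tw_join f g : time_warp f -> time_warp g -> time_warp (fun x => ojoin (f x) (g x)).
Proof.
  intros Hf Hg. apply tw_intro.
  - rewrite (tw_zero g Hg), (tw_zero f Hf). reflexivity.
  - intros x y H. apply ole_join; split; apply join_ole; [left|right].
    apply (tw_mono f Hf), H. apply (tw_mono g Hg), H.
  - intros w Hw. apply ole_join; split; apply tw_cont; auto; intros n; destruct (proj1 (ole_join _ _ _) (Hw n)); auto.
Qed.

Lemma tw_meet f g : time_warp f -> time_warp g -> time_warp (fun x => omeet (f x) (g x)).
Proof.
  intros Hf Hg. apply tw_intro.
  - rewrite (tw_zero g Hg), (tw_zero f Hf). reflexivity.
  - intros x y H. apply ole_meet; split; apply meet_ole; [left|right].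
    apply (tw_mono f Hf), H. apply (tw_mono g Hg), H.
  - intros w Hw. apply meet_ole.
    destruct (classic (ole (f Om) w)) as [Hfo|Hfo]; [left; auto|right].
    assert (exists n0, ~ ole (f (Fin n0)) w) as [n0 Hn0].
    { apply not_all_ex_not. intros HH. apply Hfo, tw_cont; auto. }
    apply tw_cont; auto. intros n.
    destruct (Nat.le_ge_cases n n0).
    + apply ole_trans with (g (Fin n0)). apply (tw_mono g Hg); simpl; auto.
      destruct (proj1 (meet_ole _ _ _) (Hw n0)); tauto.
    + destruct (proj1 (meet_ole _ _ _) (Hw n)); auto. exfalso; apply Hn0.
      apply ole_trans with (f (Fin n)); auto. apply (tw_mono f Hf); simpl; auto.
Qed.

Lemma resid_lub f g x : is_lub (fun y => exists h, time_warp h /\ (forall z, ole (f (h z)) (g z)) /\ y = h x) (resid f g x).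
Proof. unfold resid. apply omsup_lub. Qed.

Lemma resid_max f g h : time_warp h -> (forall z, ole (f (h z)) (g z)) -> forall x, ole (h x) (resid f g x).
Proof. intros Hh Hz x. apply (proj1 (resid_lub f g x)). exists h; auto. Qed.

Lemma resid_tw f g : time_warp (resid f g).
Proof.
  apply tw_intro.
  - apply ole_antisym; [|apply ole_bot]. apply (proj2 (resid_lub f g (Fin 0))).
    intros y [h [Hh [_ ->]]]. rewrite (tw_zero h Hh). apply ole_refl.
  - intros x y Hxy. apply (proj2 (resid_lub f g x)). intros z [h [Hh [Hz ->]]].
    apply ole_trans with (h y). apply (tw_mono h Hh), Hxy. apply resid_max; auto.
  - intros w Hw. apply (proj2 (resid_lub f g Om)). intros z [h [Hh [Hz ->]]].
    apply tw_cont; auto. intros n. apply ole_trans with (resid f g (Fin n)); auto. apply resid_max; auto.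
Qed.

Lemma resid_le f g : time_warp f -> forall x, ole (f (resid f g x)) (g x).
Proof.
  intros Hf x. destruct (Hf _ _ (resid_lub f g x)) as [_ H2]. apply H2.
  intros y [z [[h [Hh [Hz ->]]] ->]]. auto.
Qed.

Lemma resid_ext f f' g x : (forall y, f y = f' y) -> resid f g x = resid f' g x.
Proof.
  intros E. unfold resid at 2. symmetry. apply omsup_eq. eapply lub_equiv; [|apply resid_lub].
  intros y; split; intros [h [Hh [Hz ->]]]; exists h; (split; [exact Hh| (split; [|reflexivity])]); intros z;
  specialize (Hz z); rewrite ?E in *; auto.
Qed.

Lemma pmap_0 : pmap (Fin 0) = Fin 0.
Proof. unfold pmap. apply omsup_eq. split.
  intros y [k [-> [H1 H2]]]. simpl in H1. assert (k = 0) by lia. subst; congruence.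
  intros; apply ole_bot. Qed.
Lemma pmap_S n : pmap (Fin (S n)) = Fin n.
Proof. unfold pmap. apply omsup_eq. split.
  intros y [k [-> [H1 H2]]]. simpl in *. assert (k <> S n) by (intro; subst; auto). lia.
  intros z Hz. apply Hz. exists n. split; auto. split. simpl; lia. intro HH; injection HH; lia. Qed.
Lemma pmap_Om : pmap Om = Om.
Proof. unfold pmap. apply omsup_eq. split. intros; apply ole_top.
  intros z Hz. rewrite (all_Fin_Om z); [apply ole_refl|]. intros k. apply Hz. exists k. split; auto. split. apply ole_top. congruence. Qed.

Lemma wstar_tw f : time_warp (wstar f).
Proof. apply resid_tw. Qed.
Lemma wstar_le f : time_warp f -> forall x, ole (f (wstar f x)) (pmap x).
Proof. apply resid_le. Qed.
Lemma wstar_max f h : time_warp h -> (forall z, ole (f (h z)) (pmap z)) -> forall x, ole (h x) (wstar f x).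
Proof. apply resid_max. Qed.
Lemma wstar_ext f f' : (forall y, f y = f' y) -> forall x, wstar f x = wstar f' x.
Proof. intros; apply resid_ext; auto. Qed.

Definition stepf (n : nat) (y : om) (x : om) : om :=
  match x with Fin k => if k <=? n then Fin 0 else y | Om => y end.

Lemma stepf_tw n y : time_warp (stepf n y).
Proof.
  apply tw_intro.
  - reflexivity.
  - intros [a|] [b|]; simpl; intros H; try contradiction.
    + destruct (a <=? n) eqn:E1; [apply ole_bot|]. destruct (b <=? n) eqn:E2; [|apply ole_refl].
      apply Nat.leb_le in E2. apply Nat.leb_nle in E1. lia.
    + destruct (a <=? n); [apply ole_bot|apply ole_refl].
    + apply ole_refl.
  - intros w Hw. specialize (Hw (S n)). unfold stepf in Hw.
    rewrite (proj2 (Nat.leb_nle (S n) n)) in Hw by lia. exact Hw.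
Qed.

Lemma star_char f n y : time_warp f -> (ole y (wstar f (Fin (S n))) <-> ole (f y) (Fin n)).
Proof.
  intros Hf. split.
  - intros H. rewrite <- pmap_S. apply ole_trans with (f (wstar f (Fin (S n)))).
    apply (tw_mono f Hf), H. apply wstar_le; auto.
  - intros H. assert (E : stepf n y (Fin (S n)) = y).
    { unfold stepf. rewrite (proj2 (Nat.leb_nle (S n) n)) by lia. reflexivity. }
    rewrite <- E. apply wstar_max. apply stepf_tw.
    intros [k|]; [|rewrite pmap_Om; apply ole_top]. simpl.
    destruct (k <=? n) eqn:E1.
    + rewrite (tw_zero f Hf). apply ole_bot.
    + apply Nat.leb_nle in E1. destruct k as [|j]; [lia|]. rewrite pmap_S.
      apply ole_trans with (Fin n); auto. simpl; lia.
Qed.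

Lemma ole_notFin b k : ~ ole b (Fin k) <-> ole (Fin (S k)) b.
Proof. rewrite ole_Fin_S. split; intros H; [apply NNPP; auto| tauto]. Qed.

Lemma star_aux f : time_warp f -> forall m k,
  ole (wstar f (Fin k)) (Fin m) <-> ole (Fin k) (f (Fin (S m))).
Proof.
  intros Hf m [|k].
  - rewrite (tw_zero _ (wstar_tw f)). split; intros; apply ole_bot.
  - rewrite ole_Fin_S, (star_char f k _ Hf), ole_notFin. tauto.
Qed.

Lemma star_aux_all f : time_warp f -> forall m z,
  ole (wstar f z) (Fin m) <-> ole z (f (Fin (S m))).
Proof.
  intros Hf m [k|]. apply star_aux; auto. split.
  - intros H. rewrite (all_Fin_Om (f (Fin (S m)))). apply ole_refl.
    intros k. apply (star_aux f Hf). apply ole_trans with (wstar f Om); auto.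
    apply (tw_mono _ (wstar_tw f)), ole_top.
  - intros H. apply tw_cont. apply wstar_tw. intros n. apply (star_aux f Hf).
    apply ole_trans with Om; auto. apply ole_top.
Qed.

Lemma star_star_fin f : time_warp f -> forall n, wstar (wstar f) (Fin n) = f (Fin n).
Proof.
  intros Hf [|m].
  - rewrite (tw_zero _ (wstar_tw _)), (tw_zero _ Hf). auto.
  - apply ole_antisym.
    + apply (star_aux_all f Hf). apply (star_char (wstar f) m _ (wstar_tw f)). apply ole_refl.
    + apply (star_char (wstar f) m _ (wstar_tw f)). apply (star_aux_all f Hf). apply ole_refl.
Qed.

Lemma star_star f : time_warp f -> forall x, wstar (wstar f) x = f x.
Proof.
  intros Hf [n|]. apply star_star_fin; auto.
  apply ole_antisym; apply tw_cont; auto using wstar_tw; intros n.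
  - rewrite star_star_fin; auto. apply (tw_mono f Hf), ole_top.
  - rewrite <- star_star_fin; auto. apply (tw_mono _ (wstar_tw _)), ole_top.
Qed.

Lemma star_anti f g : time_warp f -> time_warp g -> (forall x, ole (f x) (g x)) ->
  forall x, ole (wstar g x) (wstar f x).
Proof.
  intros Hf Hg H. apply wstar_max. apply wstar_tw. intros z.
  apply ole_trans with (g (wstar g z)); auto. apply wstar_le; auto.
Qed.

Lemma star_join f g : time_warp f -> time_warp g ->
  forall x, wstar (fun y => ojoin (f y) (g y)) x = omeet (wstar f x) (wstar g x).
Proof.
  intros Hf Hg x. apply ole_antisym.
  - apply ole_meet; split; apply star_anti; auto using tw_join; intros y; apply join_ole; auto using ole_refl.
  - apply (wstar_max _ (fun x => omeet (wstar f x) (wstar g x))).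
    apply tw_meet; apply wstar_tw.
    intros z. apply ole_join; split.
    + apply ole_trans with (f (wstar f z)). apply (tw_mono f Hf). apply meet_ole; left; apply ole_refl.
      apply wstar_le; auto.
    + apply ole_trans with (g (wstar g z)). apply (tw_mono g Hg). apply meet_ole; right; apply ole_refl.
      apply wstar_le; auto.
Qed.

Lemma star_meet f g : time_warp f -> time_warp g ->
  forall x, wstar (fun y => omeet (f y) (g y)) x = ojoin (wstar f x) (wstar g x).
Proof.
  intros Hf Hg x.
  assert (E : forall y, omeet (f y) (g y) = wstar (fun y => ojoin (wstar f y) (wstar g y)) y).
  { intros y. rewrite star_join by apply wstar_tw. rewrite !star_star; auto. }
  rewrite (wstar_ext _ _ E). rewrite star_star. reflexivity. apply tw_join; apply wstar_tw.
Qed.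

Lemma K1 h : time_warp h -> ((forall x, ole x (wstar h x)) <-> (forall x, ole (h x) (pmap x))).
Proof.
  intros Hh. split.
  - intros H x. apply ole_trans with (h (wstar h x)). apply (tw_mono h Hh), H. apply wstar_le; auto.
  - intros H x. apply (wstar_max h (fun x => x)). apply tw_id. auto.
Qed.

Lemma K2 F G : time_warp F -> time_warp G ->
  ((forall x, ole (wstar G (F x)) (pmap x)) <-> (forall x, ole (F x) (G x))).
Proof.
  intros HF HG. split.
  - intros H x. rewrite <- (star_star G HG x). apply wstar_max; auto.
  - intros H x. apply ole_trans with (wstar G (G x)). apply (tw_mono _ (wstar_tw G)), H.
    rewrite <- (star_star G HG x). apply wstar_le, wstar_tw.
Qed.

Lemma teval_tw sigma : (forall i, time_warp (sigma i)) -> forall u, time_warp (teval sigma u).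
Proof.
  intros Hs u; induction u; simpl; auto using tw_meet, tw_join, tw_comp, wstar_tw, tw_id.
Qed.

Definition Xterm (s t : term) : term :=
  TMeet (TStar (TMul (TStar t) s)) (TStar (TMul (TStar s) t)).

Lemma X_ok s t : W_models_eq s t <-> W_models_le TOne (Xterm s t).
Proof.
  split.
  - intros H sigma Hs x. simpl. apply ole_meet.
    pose proof (teval_tw sigma Hs s) as HS. pose proof (teval_tw sigma Hs t) as HT.
    split.
    + revert x. apply K1. apply tw_comp; auto using wstar_tw. apply K2; auto.
      intros y; rewrite H; auto using ole_refl.
    + revert x. apply K1. apply tw_comp; auto using wstar_tw. apply K2; auto.
      intros y; rewrite H; auto using ole_refl.
  - intros H sigma Hs x.
    pose proof (teval_tw sigma Hs s) as HS. pose proof (teval_tw sigma Hs t) as HT.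
    assert (H1 : forall x, ole x (teval sigma (TStar (TMul (TStar t) s)) x)).
    { intros y. specialize (H sigma Hs y). simpl in H. apply ole_meet in H. apply H. }
    assert (H2 : forall x, ole x (teval sigma (TStar (TMul (TStar s) t)) x)).
    { intros y. specialize (H sigma Hs y). simpl in H. apply ole_meet in H. apply H. }
    simpl in H1, H2.
    pose proof (proj1 (K1 _ (tw_comp _ _ (wstar_tw _) HS)) H1) as H1'.
    pose proof (proj1 (K1 _ (tw_comp _ _ (wstar_tw _) HT)) H2) as H2'.
    pose proof (proj1 (K2 _ _ HS HT) H1'). pose proof (proj1 (K2 _ _ HT HS) H2').
    apply ole_antisym; auto.
Qed.

Definition join2 (L M : list (list term)) : list (list term) :=
  flat_map (fun C => map (fun D => C ++ D) M) L.
Fixpoint joinAll (Ls : list (list (list term))) : list (list term) :=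
  match Ls with [] => [[]] | L :: Ls' => join2 L (joinAll Ls') end.
Definition compL (a : term) (M : list (list term)) := map (map (TMul a)) M.
Definition mulcnf L M := flat_map (fun C => joinAll (map (fun a => compL a M) C)) L.
Definition starcnf L := joinAll (map (map (fun a => [TStar a])) L).
Fixpoint nf (u : term) : list (list term) :=
  match u with
  | TVar i => [[TVar i]]
  | TOne => [[TOne]]
  | TMeet s t => nf s ++ nf t
  | TJoin s t => join2 (nf s) (nf t)
  | TMul s t => mulcnf (nf s) (nf t)
  | TStar s => starcnf (nf s)
  end.

Definition jn (l : list om) := fold_right ojoin (Fin 0) l.
Definition mt (l : list om) := fold_right omeet Om l.
Definition Dv (e : term -> om) (C : list term) := jn (map e C).
Definition Cv (e : term -> om) (L : list (list term)) := mt (map (Dv e) L).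
Definition ev (sigma : nat -> om -> om) (x : om) := fun t => teval sigma t x.

Ltac omsolve := intros; repeat match goal with a : om |- _ => destruct a end; simpl in *; intros; try contradiction; auto; try (f_equal; lia).

Lemma ojoin_0r a : ojoin a (Fin 0) = a. Proof. omsolve. Qed.
Lemma omeet_Omr a : omeet a Om = a. Proof. omsolve. Qed.
Lemma ojoin_0l a : ojoin (Fin 0) a = a. Proof. omsolve. Qed.
Lemma omeet_Oml a : omeet Om a = a. Proof. omsolve. Qed.
Lemma ojoin_Omr a : ojoin a Om = Om. Proof. omsolve. Qed.
Lemma ojoin_Oml a : ojoin Om a = Om. Proof. omsolve. Qed.
Lemma ojoin_assoc a b c : ojoin a (ojoin b c) = ojoin (ojoin a b) c. Proof. omsolve. Qed.
Lemma omeet_assoc a b c : omeet a (omeet b c) = omeet (omeet a b) c. Proof. omsolve. Qed.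
Lemma distr_l a b c : ojoin a (omeet b c) = omeet (ojoin a b) (ojoin a c). Proof. omsolve. Qed.
Lemma distr_r a b c : omeet (ojoin a c) (ojoin b c) = ojoin (omeet a b) c. Proof. omsolve. Qed.

Lemma jn_app l1 l2 : jn (l1 ++ l2) = ojoin (jn l1) (jn l2).
Proof. induction l1; cbn [app]. exact (eq_sym (ojoin_0l _)). unfold jn in *; simpl; rewrite IHl1, ojoin_assoc; auto. Qed.
Lemma mt_app l1 l2 : mt (l1 ++ l2) = omeet (mt l1) (mt l2).
Proof. induction l1; cbn [app]. exact (eq_sym (omeet_Oml _)). unfold mt in *; simpl; rewrite IHl1, omeet_assoc; auto. Qed.

Lemma ole_mt z l : ole z (mt l) <-> forall b, In b l -> ole z b.
Proof.
  induction l; simpl. split; intros; [contradiction|apply ole_top].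
  unfold mt in *; simpl. rewrite ole_meet, IHl. split.
  intros [H1 H2] b [->|Hb]; auto. intros H; split; auto.
Qed.

Lemma tw_meet2 f : time_warp f -> forall u v, f (omeet u v) = omeet (f u) (f v).
Proof.
  intros Hf u v. destruct (ole_total u v) as [H|H].
  - assert (omeet u v = u) as -> by (revert H; omsolve).
    pose proof (tw_mono f Hf _ _ H). revert H0. generalize (f u) (f v). intros; omsolve.
  - assert (omeet u v = v) as -> by (revert H; omsolve).
    pose proof (tw_mono f Hf _ _ H). revert H0. generalize (f u) (f v). intros; omsolve.
Qed.
Lemma tw_join2 f : time_warp f -> forall u v, f (ojoin u v) = ojoin (f u) (f v).
Proof.
  intros Hf u v. destruct (ole_total u v) as [H|H].
  - assert (ojoin u v = v) as -> by (revert H; omsolve).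
    pose proof (tw_mono f Hf _ _ H). revert H0. generalize (f u) (f v). intros; omsolve.
  - assert (ojoin u v = u) as -> by (revert H; omsolve).
    pose proof (tw_mono f Hf _ _ H). revert H0. generalize (f u) (f v). intros; omsolve.
Qed.
Lemma tw_jn f : time_warp f -> forall l, f (jn l) = jn (map f l).
Proof. intros Hf l; induction l; simpl. apply tw_zero; auto. unfold jn in *; simpl. rewrite tw_join2, IHl; auto. Qed.
Lemma tw_mt f : time_warp f -> forall l, l <> [] -> f (mt l) = mt (map f l).
Proof.
  intros Hf l; induction l; intros Hne; [congruence|]. destruct l.
  - simpl. unfold mt; simpl. rewrite !omeet_Omr. auto.
  - unfold mt in *; simpl in *. rewrite tw_meet2, IHl; auto. congruence.
Qed.

Lemma Cv_app e L M : Cv e (L ++ M) = omeet (Cv e L) (Cv e M).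
Proof. unfold Cv. rewrite map_app, mt_app. auto. Qed.
Lemma Dv_app e C D : Dv e (C ++ D) = ojoin (Dv e C) (Dv e D).
Proof. unfold Dv. rewrite map_app, jn_app. auto. Qed.

Lemma Cv_map_app e C M : Cv e (map (fun D => C ++ D) M) = ojoin (Dv e C) (Cv e M).
Proof.
  induction M. exact (eq_sym (ojoin_Omr _)).
  unfold Cv in *; simpl. rewrite IHM, Dv_app, distr_l. auto.
Qed.

Lemma Cv_join2 e L M : Cv e (join2 L M) = ojoin (Cv e L) (Cv e M).
Proof.
  induction L. exact (eq_sym (ojoin_Oml _)).
  unfold join2 in *; simpl. rewrite Cv_app, IHL, Cv_map_app.
  unfold Cv at 2; simpl. rewrite distr_r. auto.
Qed.

Lemma Cv_joinAll e Ls : Cv e (joinAll Ls) = jn (map (Cv e) Ls).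
Proof.
  induction Ls; simpl. unfold Cv, Dv; simpl. reflexivity.
  rewrite Cv_join2, IHLs. auto.
Qed.

Lemma Cv_flat e (g : list term -> list (list term)) L :
  Cv e (flat_map g L) = mt (map (fun C => Cv e (g C)) L).
Proof. induction L; simpl; auto. rewrite Cv_app, IHL. auto. Qed.


Lemma Cv_compL sigma (Hs : forall i, time_warp (sigma i)) a x M : M <> [] ->
  Cv (ev sigma x) (compL a M) = teval sigma a (Cv (ev sigma x) M).
Proof.
  intros HM. pose proof (teval_tw sigma Hs a) as Ha. unfold Cv, compL.
  rewrite (tw_mt _ Ha) by (destruct M; simpl; congruence).
  rewrite !map_map. f_equal. apply map_ext. intros D. unfold Dv. rewrite map_map.
  rewrite (tw_jn _ Ha), map_map. reflexivity.
Qed.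

Lemma Cv_mulcnf sigma (Hs : forall i, time_warp (sigma i)) x L M : M <> [] ->
  Cv (ev sigma x) (mulcnf L M) = Cv (ev sigma (Cv (ev sigma x) M)) L.
Proof.
  intros HM. unfold mulcnf. rewrite Cv_flat. unfold Cv at 2. f_equal.
  apply map_ext. intros C. rewrite Cv_joinAll, map_map. unfold Dv. f_equal.
  apply map_ext. intros a. rewrite Cv_compL; auto.
Qed.

Lemma tw_Dv sigma (Hs : forall i, time_warp (sigma i)) C : time_warp (fun y => Dv (ev sigma y) C).
Proof.
  induction C; simpl. apply tw_bot. apply (tw_join (teval sigma a) (fun y => Dv (ev sigma y) C)); auto.
  apply teval_tw; auto.
Qed.

Lemma tw_Cv sigma (Hs : forall i, time_warp (sigma i)) L : L <> [] -> time_warp (fun y => Cv (ev sigma y) L).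
Proof.
  induction L; intros Hne; [congruence|]. destruct L.
  - assert (E : forall y, Cv (ev sigma y) [a] = Dv (ev sigma y) a) by (intros; apply omeet_Omr).
    eapply tw_intro; intros; rewrite ?E.
    + apply (tw_zero (fun y => Dv (ev sigma y) a)), tw_Dv; auto.
    + apply (tw_mono _ (tw_Dv sigma Hs a)); auto.
    + apply (tw_cont _ (tw_Dv sigma Hs a)). intros n; specialize (H n). rewrite E in H; auto.
  - apply (tw_meet (fun y => Dv (ev sigma y) a) (fun y => Cv (ev sigma y) (l :: L))).
    apply tw_Dv; auto. apply IHL; congruence.
Qed.

Lemma star_Dv sigma (Hs : forall i, time_warp (sigma i)) C : C <> [] -> forall x,
  wstar (fun y => Dv (ev sigma y) C) x = mt (map (fun a => wstar (teval sigma a) x) C).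
Proof.
  induction C; intros Hne x; [congruence|]. destruct C.
  - unfold Dv, mt; simpl. rewrite omeet_Omr. apply wstar_ext. intros y. apply ojoin_0r.
  - change (wstar (fun y => ojoin (teval sigma a y) (Dv (ev sigma y) (t :: C))) x =
            omeet (wstar (teval sigma a) x) (mt (map (fun a => wstar (teval sigma a) x) (t :: C)))).
    rewrite star_join. rewrite IHC; auto. congruence. apply teval_tw; auto. apply tw_Dv; auto.
Qed.

Lemma star_Cv sigma (Hs : forall i, time_warp (sigma i)) L : L <> [] -> (forall C, In C L -> C <> []) ->
  forall x, wstar (fun y => Cv (ev sigma y) L) x =
    jn (map (fun C => mt (map (fun a => wstar (teval sigma a) x) C)) L).
Proof.
  induction L; intros Hne Hcl x; [congruence|]. destruct L.
  - unfold Cv, jn; simpl. rewrite ojoin_0r. rewrite <- star_Dv; auto. apply wstar_ext.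
    intros y; apply omeet_Omr. apply Hcl; simpl; auto.
  - change (wstar (fun y => omeet (Dv (ev sigma y) a) (Cv (ev sigma y) (l :: L))) x =
      ojoin (mt (map (fun a => wstar (teval sigma a) x) a))
            (jn (map (fun C => mt (map (fun a => wstar (teval sigma a) x) C)) (l :: L)))).
    rewrite star_meet, star_Dv, IHL; auto.
    congruence. intros; apply Hcl; simpl; auto. apply Hcl; simpl; auto.
    apply tw_Dv; auto. apply tw_Cv; auto. congruence.
Qed.

Lemma Cv_starcnf sigma x L :
  Cv (ev sigma x) (starcnf L) = jn (map (fun C => mt (map (fun a => wstar (teval sigma a) x) C)) L).
Proof.
  unfold starcnf. rewrite Cv_joinAll, map_map. f_equal. apply map_ext. intros C.
  unfold Cv. rewrite map_map. f_equal. apply map_ext. intros a. unfold Dv; simpl. apply ojoin_0r.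
Qed.

Definition goodC (C : list term) := C <> [] /\ forall t, In t C -> is_basic t.
Definition goodL (L : list (list term)) := L <> [] /\ forall C, In C L -> goodC C.

Lemma in_join2 C L M : In C (join2 L M) -> exists C1 D, In C1 L /\ In D M /\ C = C1 ++ D.
Proof.
  unfold join2. rewrite in_flat_map. intros [C1 [H1 H2]]. apply in_map_iff in H2.
  destruct H2 as [D [<- HD]]. eauto.
Qed.

Lemma join2_ne L M : L <> [] -> M <> [] -> join2 L M <> [].
Proof.
  destruct L as [|C L]; [congruence|]. destruct M as [|D M]; [congruence|]. intros _ _.
  unfold join2; simpl. congruence.
Qed.

Lemma joinAll_ne Ls : joinAll Ls <> [].
Proof. induction Ls; simpl. congruence. apply join2_ne; auto. Abort.

Lemma good_join2 L M : goodL L -> goodL M -> goodL (join2 L M).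
Proof.
  intros [H1 H2] [H3 H4]. split. apply join2_ne; auto.
  intros C HC. apply in_join2 in HC. destruct HC as [C1 [D [HC1 [HD ->]]]].
  destruct (H2 _ HC1) as [G1 G2]. destruct (H4 _ HD) as [G3 G4]. split.
  destruct C1; simpl; congruence. intros t Ht. apply in_app_or in Ht. destruct Ht; auto.
Qed.

Lemma good_joinAll Ls : Ls <> [] -> (forall L, In L Ls -> goodL L) -> goodL (joinAll Ls).
Proof.
  induction Ls as [|L Ls IH]; intros Hne HL; [congruence|]. destruct Ls as [|L' Ls].
  - simpl. destruct (HL L (or_introl eq_refl)) as [H1 H2]. split.
    unfold join2. destruct L; simpl; congruence.
    intros C HC. apply in_join2 in HC. destruct HC as [C1 [D [HC1 [[<-|[]] ->]]]].
    rewrite app_nil_r. auto.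
  - simpl joinAll. apply good_join2. apply HL; simpl; auto. apply IH. congruence.
    intros; apply HL; simpl; auto.
Qed.

Lemma good_mulcnf L M : goodL L -> goodL M -> goodL (mulcnf L M).
Proof.
  intros [H1 H2] [H3 H4].
  assert (G : forall C, In C L -> goodL (joinAll (map (fun a => compL a M) C))).
  { intros C HC. destruct (H2 C HC) as [G1 G2]. apply good_joinAll.
    destruct C; simpl; congruence.
    intros L' HL'. apply in_map_iff in HL'. destruct HL' as [a [<- Ha]].
    unfold compL. split. destruct M; simpl; congruence.
    intros D HD. apply in_map_iff in HD. destruct HD as [D' [<- HD']].
    destruct (H4 _ HD') as [G3 G4]. split. destruct D'; simpl; congruence.
    intros t Ht. apply in_map_iff in Ht. destruct Ht as [b [<- Hb]]. simpl; auto. }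
  unfold mulcnf. split.
  - destruct L as [|C L]; [congruence|]. simpl. destruct (G C (or_introl eq_refl)) as [G1 _].
    destruct (joinAll _); simpl; congruence.
  - intros D HD. apply in_flat_map in HD. destruct HD as [C [HC HD]]. apply (G C HC); auto.
Qed.

Lemma good_starcnf L : goodL L -> goodL (starcnf L).
Proof.
  intros [H1 H2]. unfold starcnf. apply good_joinAll.
  destruct L; simpl; congruence.
  intros L' HL'. apply in_map_iff in HL'. destruct HL' as [C [<- HC]].
  destruct (H2 C HC) as [G1 G2]. split. destruct C; simpl; congruence.
  intros D HD. apply in_map_iff in HD. destruct HD as [a [<- Ha]]. split. congruence.
  intros t [<-|[]]. simpl; auto.
Qed.

Lemma good_nf u : goodL (nf u).
Proof.
  induction u; simpl.
  - split. congruence. intros C [<-|[]]. split. congruence. intros t [<-|[]]; simpl; auto.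
  - destruct IHu1 as [H1 H2], IHu2 as [H3 H4]. split.
    destruct (nf u1); simpl; congruence.
    intros C HC. apply in_app_or in HC. destruct HC; auto.
  - apply good_join2; auto.
  - apply good_mulcnf; auto.
  - apply good_starcnf; auto.
  - split. congruence. intros C [<-|[]]. split. congruence. intros t [<-|[]]; simpl; auto.
Qed.

Lemma nf_sem sigma (Hs : forall i, time_warp (sigma i)) u : forall x,
  teval sigma u x = Cv (ev sigma x) (nf u).
Proof.
  induction u; intros x; simpl.
  - unfold Cv, Dv, mt, jn; simpl. rewrite omeet_Omr, ojoin_0r. auto.
  - rewrite Cv_app, IHu1, IHu2. auto.
  - rewrite Cv_join2, IHu1, IHu2. auto.
  - rewrite Cv_mulcnf; auto. rewrite <- IHu2. apply IHu1. apply (good_nf u2).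
  - rewrite Cv_starcnf. rewrite (wstar_ext _ _ IHu). apply star_Cv; auto.
    apply (good_nf u). apply (good_nf u).
  - unfold Cv, Dv, mt, jn; simpl. rewrite omeet_Omr, ojoin_0r. auto.
Qed.

Lemma bigjoin_sem sigma a r x : teval sigma (bigjoin a r) x = Dv (ev sigma x) (a :: r).
Proof.
  revert a; induction r as [|c r IH]; intros b; simpl.
  - exact (eq_sym (ojoin_0r _)).
  - rewrite IH. reflexivity.
Qed.

Lemma valid_nf u : W_models_le TOne u <->
  forall C, In C (nf u) -> W_models_le TOne (bigjoin (hd TOne C) (tl C)).
Proof.
  split.
  - intros H C HC sigma Hs x. simpl. pose proof (proj1 (proj2 (good_nf u) C HC)) as Hne. destruct C as [|a r]; [congruence|].
    simpl. rewrite bigjoin_sem. specialize (H sigma Hs x). simpl in H. rewrite nf_sem in H; auto.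
    unfold Cv in H. apply ole_mt with (b := Dv (ev sigma x) (a :: r)) in H; auto.
    apply in_map; auto.
  - intros H sigma Hs x. simpl. rewrite nf_sem; auto. unfold Cv. apply ole_mt.
    intros b Hb. apply in_map_iff in Hb. destruct Hb as [C [<- HC]].
    pose proof (proj1 (proj2 (good_nf u) C HC)) as Hne. destruct C as [|a r]; [congruence|].
    specialize (H _ HC sigma Hs x). simpl in H. rewrite bigjoin_sem in H. auto.
Qed.

Definition cmp1 (c : recf) (f : nat -> nat) := forall x, reval c [x] (f x).
Definition cmp2 (c : recf) (f : nat -> nat -> nat) := forall x y, reval c [x; y] (f x y).
Definition cmp3 (c : recf) (f : nat -> nat -> nat -> nat) := forall x y z, reval c [x; y; z] (f x y z).
Definition C1 f := { c | cmp1 c f }.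
Definition C2 f := { c | cmp2 c f }.
Definition C3 f := { c | cmp3 c f }.

Inductive ex : Type :=
| V (i : nat) | K (n : nat)
| A1 (f : nat -> nat) (H : C1 f) (e : ex)
| A2 (f : nat -> nat -> nat) (H : C2 f) (e1 e2 : ex)
| A3 (f : nat -> nat -> nat -> nat) (H : C3 f) (e1 e2 e3 : ex).

Fixpoint den (e : ex) (v : list nat) : nat :=
  match e with
  | V i => nth i v 0
  | K n => n
  | A1 f _ e => f (den e v)
  | A2 f _ e1 e2 => f (den e1 v) (den e2 v)
  | A3 f _ e1 e2 e3 => f (den e1 v) (den e2 v) (den e3 v)
  end.

Fixpoint kc (n : nat) : recf := match n with 0 => RZero | S m => RComp RSucc [kc m] end.

Fixpoint cp (e : ex) : recf :=
  match e with
  | V i => RProj i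
  | K n => kc n
  | A1 _ H e => RComp (proj1_sig H) [cp e]
  | A2 _ H e1 e2 => RComp (proj1_sig H) [cp e1; cp e2]
  | A3 _ H e1 e2 e3 => RComp (proj1_sig H) [cp e1; cp e2; cp e3]
  end.

Lemma kc_ok n v : reval (kc n) v n.
Proof.
  induction n; simpl. constructor. eapply ev_comp. apply evs_cons. apply IHn. apply evs_nil. apply ev_succ.
Qed.

Lemma cp_ok e : forall v, reval (cp e) v (den e v).
Proof.
  induction e; intros v; simpl.
  - apply ev_proj.
  - apply kc_ok.
  - destruct H as [c Hc]; simpl. eapply ev_comp; [|apply Hc].
    repeat (apply evs_cons; [eauto|]). apply evs_nil.
  - destruct H as [c Hc]; simpl. eapply ev_comp; [|apply Hc].
    repeat (apply evs_cons; [eauto|]). apply evs_nil.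
  - destruct H as [c Hc]; simpl. eapply ev_comp; [|apply Hc].
    repeat (apply evs_cons; [eauto|]). apply evs_nil.
Qed.

Definition mk1 (e : ex) (f : nat -> nat) (H : forall x, den e [x] = f x) : C1 f.
Proof. exists (cp e). intros x. rewrite <- H. apply cp_ok. Defined.
Definition mk2 (e : ex) (f : nat -> nat -> nat) (H : forall x y, den e [x; y] = f x y) : C2 f.
Proof. exists (cp e). intros x y. rewrite <- H. apply cp_ok. Defined.
Definition mk3 (e : ex) (f : nat -> nat -> nat -> nat) (H : forall x y z, den e [x; y; z] = f x y z) : C3 f.
Proof. exists (cp e). intros x y z. rewrite <- H. apply cp_ok. Defined.

Definition ext1 f g (H : C1 f) (E : forall x, f x = g x) : C1 g.
Proof. destruct H as [c Hc]. exists c. intros x. rewrite <- E. apply Hc. Defined.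
Definition ext2 f g (H : C2 f) (E : forall x y, f x y = g x y) : C2 g.
Proof. destruct H as [c Hc]. exists c. intros x y. rewrite <- E. apply Hc. Defined.
Definition ext3 f g (H : C3 f) (E : forall x y z, f x y z = g x y z) : C3 g.
Proof. destruct H as [c Hc]. exists c. intros x y z. rewrite <- E. apply Hc. Defined.

Fixpoint precF (g : nat -> nat) (h : nat -> nat -> nat -> nat) (n x : nat) : nat :=
  match n with 0 => g x | S m => h m (precF g h m x) x end.

Definition prec_C g h (G : C1 g) (Hh : C3 h) : C2 (precF g h).
Proof.
  destruct G as [cg Hg], Hh as [ch Hch]. exists (RPrec cg ch). intros n x.
  induction n; simpl. constructor. apply Hg. eapply ev_precS. apply IHn. apply Hch.
Defined.

Definition succC : C1 S.
Proof. exists RSucc. intros x. apply ev_succ. Defined.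

Definition idC : C1 (fun x => x) := mk1 (V 0) _ (fun x => eq_refl).

Definition addC : C2 Nat.add.
Proof.
  refine (ext2 _ _ (prec_C _ _ idC (mk3 (A1 S succC (V 1)) (fun _ r _ => S r) (fun _ _ _ => eq_refl))) _).
  intros n x; induction n; simpl; auto.
Defined.

Definition mulC : C2 Nat.mul.
Proof.
  refine (ext2 _ _ (prec_C (fun _ => 0) _ (mk1 (K 0) _ (fun _ => eq_refl))
     (mk3 (A2 _ addC (V 2) (V 1)) (fun _ r x => x + r) (fun _ _ _ => eq_refl))) _).
  intros n x; induction n; simpl; auto.
Defined.

Definition predC : C1 Nat.pred.
Proof.
  pose (P := prec_C (fun _ => 0) (fun m _ _ => m) (mk1 (K 0) _ (fun _ => eq_refl))
     (mk3 (V 0) _ (fun _ _ _ => eq_refl))).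
  refine (mk1 (A2 _ P (V 0) (K 0)) _ _). intros [|x]; reflexivity.
Defined.

Definition subC : C2 Nat.sub.
Proof.
  pose (P := prec_C (fun x => x) (fun _ r _ => Nat.pred r) idC
     (mk3 (A1 _ predC (V 1)) _ (fun _ _ _ => eq_refl))).
  refine (mk2 (A2 _ P (V 1) (V 0)) _ _). intros x y; simpl.
  induction y; simpl. lia. rewrite IHy. lia.
Defined.

Definition cond (c x y : nat) := match c with 0 => x | S _ => y end.
Definition condC : C3 cond.
Proof.
  refine (ext3 (fun c x y => x * (1 - c) + y * (1 - (1 - c))) _
    (mk3 (A2 _ addC (A2 _ mulC (V 1) (A2 _ subC (K 1) (V 0)))
                    (A2 _ mulC (V 2) (A2 _ subC (K 1) (A2 _ subC (K 1) (V 0))))) _ (fun _ _ _ => eq_refl)) _).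
  intros [|c] x y; simpl; lia.
Defined.

Fixpoint tri (k : nat) : nat := match k with 0 => 0 | S m => tri m + S m end.
Definition triC : C1 tri.
Proof.
  pose (P := prec_C (fun _ => 0) (fun m r _ => r + S m) (mk1 (K 0) _ (fun _ => eq_refl))
     (mk3 (A2 _ addC (V 1) (A1 _ succC (V 0))) _ (fun _ _ _ => eq_refl))).
  refine (mk1 (A2 _ P (V 0) (K 0)) _ _). intros x; simpl. induction x; simpl; auto.
Defined.

Fixpoint wv (n : nat) : nat :=
  match n with 0 => 0 | S m => if tri (S (wv m)) <=? S m then S (wv m) else wv m end.
Definition wvC : C1 wv.
Proof.
  pose (P := prec_C (fun _ => 0) (fun m r _ => r + (1 - (tri (S r) - S m))) (mk1 (K 0) _ (fun _ => eq_refl))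
     (mk3 (A2 _ addC (V 1) (A2 _ subC (K 1) (A2 _ subC (A1 _ triC (A1 _ succC (V 1))) (A1 _ succC (V 0))))) _
       (fun _ _ _ => eq_refl))).
  refine (mk1 (A2 _ P (V 0) (K 0)) _ _). intros x; simpl. induction x; simpl; auto.
  rewrite IHx. destruct (tri (wv x) + S (wv x) <=? S x) eqn:E.
  - apply Nat.leb_le in E. replace (tri (wv x) + S (wv x) - S x) with 0 by lia. lia.
  - apply Nat.leb_nle in E. destruct (tri (wv x) + S (wv x) - S x) eqn:E2. lia. lia.
Defined.

Definition sndc (n : nat) := n - tri (wv n).
Definition fstc (n : nat) := wv n - sndc n.
Definition sndC : C1 sndc := mk1 (A2 _ subC (V 0) (A1 _ triC (A1 _ wvC (V 0)))) _ (fun _ => eq_refl).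
Definition fstC : C1 fstc := mk1 (A2 _ subC (A1 _ wvC (V 0)) (A1 _ sndC (V 0))) _ (fun _ => eq_refl).

Lemma tri_mono a b : a <= b -> tri a <= tri b.
Proof. induction 1; simpl; lia. Qed.
Lemma tri_ge k : k <= tri k.
Proof. induction k; simpl; lia. Qed.
Lemma tri_double k : tri k * 2 = k * (k + 1).
Proof. induction k; simpl; lia. Qed.

Lemma cpair_tri a b : cpair a b = tri (a + b) + b.
Proof.
  unfold cpair. f_equal. rewrite <- tri_double. apply Nat.div_mul. lia.
Qed.

Lemma wv_spec n : tri (wv n) <= n < tri (S (wv n)).
Proof.
  induction n. simpl; lia. cbn [wv].
  destruct (tri (S (wv n)) <=? S n) eqn:E.
  - apply Nat.leb_le in E. simpl in *. lia.
  - apply Nat.leb_nle in E. simpl in *. lia.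
Qed.

Lemma wv_unique n k : tri k <= n < tri (S k) -> wv n = k.
Proof.
  intros Hk. pose proof (wv_spec n). destruct (Nat.lt_trichotomy (wv n) k) as [Hl|[Hl|Hl]]; auto.
  - pose proof (tri_mono (S (wv n)) k Hl). lia.
  - pose proof (tri_mono (S k) (wv n) Hl). lia.
Qed.

Lemma wv_cpair a b : wv (cpair a b) = a + b.
Proof. apply wv_unique. rewrite cpair_tri. simpl. lia. Qed.
Lemma snd_cpair a b : sndc (cpair a b) = b.
Proof. unfold sndc. rewrite wv_cpair, cpair_tri. lia. Qed.
Lemma fst_cpair a b : fstc (cpair a b) = a.
Proof. unfold fstc. rewrite snd_cpair, wv_cpair. lia. Qed.
Lemma sndc_le n : sndc n <= n.
Proof. unfold sndc; lia. Qed.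
Lemma fstc_le n : fstc n <= n.
Proof. unfold fstc. pose proof (wv_spec n). pose proof (tri_ge (wv n)). lia. Qed.
Lemma cpair_ge_l a b : a <= cpair a b.
Proof. rewrite cpair_tri. pose proof (tri_ge (a + b)). lia. Qed.
Lemma cpair_ge_r a b : b <= cpair a b.
Proof. rewrite cpair_tri. lia. Qed.
Lemma cpair_gt_r a b : 0 < a -> b < cpair a b.
Proof. rewrite cpair_tri. pose proof (tri_ge (a + b)). lia. Qed.

Definition cpairC : C2 cpair.
Proof.
  refine (ext2 _ _ (mk2 (A2 _ addC (A1 _ triC (A2 _ addC (V 0) (V 1))) (V 1)) (fun a b => tri (a + b) + b)
    (fun _ _ => eq_refl)) _).
  intros; rewrite cpair_tri; auto.
Defined.

Definition cons (x l : nat) := S (cpair x l).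
Definition head (l : nat) := fstc (Nat.pred l).
Definition tail (l : nat) := sndc (Nat.pred l).
Definition consC : C2 cons := mk2 (A1 _ succC (A2 _ cpairC (V 0) (V 1))) _ (fun _ _ => eq_refl).
Definition headC : C1 head := mk1 (A1 _ fstC (A1 _ predC (V 0))) _ (fun _ => eq_refl).
Definition tailC : C1 tail := mk1 (A1 _ sndC (A1 _ predC (V 0))) _ (fun _ => eq_refl).
Lemma head_cons x l : head (cons x l) = x.
Proof. apply fst_cpair. Qed.
Lemma tail_cons x l : tail (cons x l) = l.
Proof. apply snd_cpair. Qed.
Lemma tail_lt q : q <> 0 -> tail q < q.
Proof. unfold tail. pose proof (sndc_le (Nat.pred q)). lia. Qed.

Fixpoint drop (k L : nat) : nat := match k with 0 => L | S m => tail (drop m L) end.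
Definition dropC : C2 drop.
Proof.
  refine (ext2 _ _ (prec_C (fun x => x) (fun _ r _ => tail r) idC (mk3 (A1 _ tailC (V 1)) _ (fun _ _ _ => eq_refl))) _).
  intros k L; induction k; simpl; congruence.
Defined.
Lemma drop_S k L : drop (S k) L = drop k (tail L).
Proof. induction k; simpl in *; congruence. Qed.

Definition nthc (k L : nat) := head (drop k L).
Definition nthcC : C2 nthc := mk2 (A1 _ headC (A2 _ dropC (V 0) (V 1))) _ (fun _ _ => eq_refl).
Lemma nthc_cons0 x L : nthc 0 (cons x L) = x.
Proof. apply head_cons. Qed.
Lemma nthc_consS k x L : nthc (S k) (cons x L) = nthc k L.
Proof. unfold nthc. rewrite drop_S, tail_cons. auto. Qed.

Definition lk (n T m : nat) := nthc (n - 1 - m) T.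
Definition lkC : C3 lk := mk3 (A2 _ nthcC (A2 _ subC (A2 _ subC (V 0) (K 1)) (V 2)) (V 1)) _ (fun _ _ _ => eq_refl).

Fixpoint tbl (H : nat -> nat -> nat -> nat) (n x : nat) : nat :=
  match n with 0 => 0 | S m => cons (H m (tbl H m x) x) (tbl H m x) end.
Definition covF H n x := H n (tbl H n x) x.

Definition cov_C H (HH : C3 H) : C2 (covF H).
Proof.
  pose (P := prec_C (fun _ => 0) (fun m r x => cons (H m r x) r) (mk1 (K 0) _ (fun _ => eq_refl))
    (mk3 (A2 _ consC (A3 _ HH (V 0) (V 1) (V 2)) (V 1)) _ (fun _ _ _ => eq_refl))).
  assert (E : forall n x, precF (fun _ => 0) (fun m r x => cons (H m r x) r) n x = tbl H n x).
  { intros n x; induction n; simpl; congruence. }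
  refine (mk2 (A3 _ HH (V 0) (A2 _ P (V 0) (V 1)) (V 1)) _ _).
  intros n x; simpl. rewrite E. reflexivity.
Defined.

Lemma tbl_lk H n x m : m < n -> lk n (tbl H n x) m = covF H m x.
Proof.
  induction n; intros Hm. lia. simpl tbl. unfold lk.
  destruct (Nat.eq_dec m n) as [->|Hne].
  - replace (S n - 1 - n) with 0 by lia. rewrite nthc_cons0. reflexivity.
  - replace (S n - 1 - m) with (S (n - 1 - m)) by lia. rewrite nthc_consS. apply IHn. lia.
Qed.

Fixpoint lc (l : list nat) : nat := match l with [] => 0 | a :: l' => cons a (lc l') end.

Lemma cov_rec H n x : n <> 0 -> lk n (tbl H n x) (tail n) = covF H (tail n) x.
Proof. intros; apply tbl_lk, tail_lt; auto. Qed.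

Lemma cons_ne a l : cons a l <> 0.
Proof. unfold cons; lia. Qed.

Ltac covstep := unfold covF at 1; cbn [cond];
  try (rewrite cov_rec by apply cons_ne); rewrite ?head_cons, ?tail_cons.

Definition app_H (n T M : nat) := cond n M (cons (head n) (lk n T (tail n))).
Definition appc L M := covF app_H L M.
Definition app_HC : C3 app_H :=
  mk3 (A3 _ condC (V 0) (V 2) (A2 _ consC (A1 _ headC (V 0)) (A3 _ lkC (V 0) (V 1) (A1 _ tailC (V 0))))) _
    (fun _ _ _ => eq_refl).
Definition appC : C2 appc := cov_C _ app_HC.
Lemma appc_cons a l M : appc (cons a l) M = cons a (appc l M).
Proof. unfold appc, app_H. covstep. reflexivity. Qed.
Lemma appc_lc l m : appc (lc l) (lc m) = lc (l ++ m).
Proof. induction l; cbn [lc app map]. reflexivity. rewrite appc_cons, IHl. reflexivity. Qed.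

Definition map_H (f : nat -> nat -> nat) (n T x : nat) := cond n 0 (cons (f x (head n)) (lk n T (tail n))).
Definition mapc f x M := covF (map_H f) M x.
Definition mapC f (Hf : C2 f) : C2 (mapc f).
Proof.
  pose (HH := mk3 (A3 _ condC (V 0) (K 0) (A2 _ consC (A2 _ Hf (V 2) (A1 _ headC (V 0)))
              (A3 _ lkC (V 0) (V 1) (A1 _ tailC (V 0))))) (map_H f) (fun _ _ _ => eq_refl)).
  exact (mk2 (A2 _ (cov_C _ HH) (V 1) (V 0)) _ (fun _ _ => eq_refl)).
Defined.
Lemma mapc_cons f x a l : mapc f x (cons a l) = cons (f x a) (mapc f x l).
Proof. unfold mapc, map_H. covstep. reflexivity. Qed.
Lemma mapc_lc f x l : mapc f x (lc l) = lc (map (f x) l).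
Proof. induction l; cbn [lc app map]. reflexivity. rewrite mapc_cons, IHl. reflexivity. Qed.

Definition concat_H (n T z : nat) := cond n 0 (appc (head n) (lk n T (tail n))).
Definition concatc L := covF concat_H L 0.
Definition concatC : C1 concatc.
Proof.
  pose (HH := mk3 (A3 _ condC (V 0) (K 0) (A2 _ appC (A1 _ headC (V 0))
              (A3 _ lkC (V 0) (V 1) (A1 _ tailC (V 0))))) concat_H (fun _ _ _ => eq_refl)).
  exact (mk1 (A2 _ (cov_C _ HH) (V 0) (K 0)) _ (fun _ => eq_refl)).
Defined.
Lemma concatc_cons a l : concatc (cons a l) = appc a (concatc l).
Proof. unfold concatc, concat_H. covstep. reflexivity. Qed.
Lemma concatc_lc Ls : concatc (lc (map lc Ls)) = lc (concat Ls).
Proof. induction Ls; cbn [lc app map concat]. reflexivity. rewrite concatc_cons, IHLs, appc_lc. reflexivity. Qed.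

Definition prodc f L M := concatc (mapc (fun M a => mapc f a M) M L).
Definition prodC f (Hf : C2 f) : C2 (prodc f).
Proof.
  pose (G := mk2 (A2 _ (mapC f Hf) (V 1) (V 0)) (fun M a => mapc f a M) (fun _ _ => eq_refl)).
  exact (mk2 (A1 _ concatC (A2 _ (mapC _ G) (V 1) (V 0))) _ (fun _ _ => eq_refl)).
Defined.

Lemma flat_map_mapl {A B C} (h : B -> list C) (f : A -> B) l :
  flat_map h (map f l) = flat_map (fun x => h (f x)) l.
Proof. induction l; simpl; congruence. Qed.
Lemma map_flat_map' {A B C} (f : B -> C) (g : A -> list B) l :
  map f (flat_map g l) = flat_map (fun x => map f (g x)) l.
Proof. induction l; simpl; auto. rewrite map_app; congruence. Qed.
Lemma flat_map_concat {A B} (g : A -> list B) l : flat_map g l = concat (map g l).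
Proof. induction l; simpl; congruence. Qed.

Lemma prodc_lc f l m : prodc f (lc l) (lc m) = lc (flat_map (fun a => map (f a) m) l).
Proof.
  unfold prodc. rewrite mapc_lc.
  replace (map (fun a => mapc f a (lc m)) l) with (map lc (map (fun a => map (f a) m) l)).
  rewrite concatc_lc, flat_map_concat. reflexivity.
  rewrite map_map. apply map_ext. intros; rewrite mapc_lc. reflexivity.
Qed.

Definition jA_H (n T z : nat) := cond n (cons 0 0) (prodc appc (head n) (lk n T (tail n))).
Definition joinAllc L := covF jA_H L 0.
Definition joinAllC : C1 joinAllc.
Proof.
  pose (HH := mk3 (A3 _ condC (V 0) (K (cons 0 0)) (A2 _ (prodC _ appC) (A1 _ headC (V 0))
              (A3 _ lkC (V 0) (V 1) (A1 _ tailC (V 0))))) jA_H (fun _ _ _ => eq_refl)).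
  exact (mk1 (A2 _ (cov_C _ HH) (V 0) (K 0)) _ (fun _ => eq_refl)).
Defined.
Lemma joinAllc_cons a l : joinAllc (cons a l) = prodc appc a (joinAllc l).
Proof. unfold joinAllc, jA_H. covstep. reflexivity. Qed.

Definition E := enc_term.
Definition EC (C : list term) := lc (map E C).
Definition EL (L : list (list term)) := lc (map EC L).

Lemma join2c L M : prodc appc (EL L) (EL M) = EL (join2 L M).
Proof.
  unfold EL at 1 2. rewrite prodc_lc. unfold EL, join2. f_equal.
  rewrite flat_map_mapl, map_flat_map'. apply flat_map_ext. intros C.
  rewrite !map_map. apply map_ext. intros D. unfold EC. rewrite appc_lc, map_app. reflexivity.
Qed.

Lemma joinAllc_lc Ls : joinAllc (lc (map EL Ls)) = EL (joinAll Ls).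
Proof.
  induction Ls; cbn [lc map joinAll]. reflexivity. rewrite joinAllc_cons, IHLs, join2c. reflexivity.
Qed.

Definition mulc a b := cpair 3 (cpair a b).
Definition mulcC : C2 mulc := mk2 (A2 _ cpairC (K 3) (A2 _ cpairC (V 0) (V 1))) _ (fun _ _ => eq_refl).
Definition compLc a M := mapc (mapc mulc) a M.
Definition compLC : C2 compLc := mapC _ (mapC _ mulcC).
Definition mulcnfc L M := concatc (mapc (fun M C => joinAllc (mapc (fun M a => compLc a M) M C)) M L).
Definition mulcnfC : C2 mulcnfc.
Proof.
  pose (G := mk2 (A2 _ compLC (V 1) (V 0)) (fun M a => compLc a M) (fun _ _ => eq_refl)).
  pose (H := mk2 (A1 _ joinAllC (A2 _ (mapC _ G) (V 0) (V 1)))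
       (fun M C => joinAllc (mapc (fun M a => compLc a M) M C)) (fun _ _ => eq_refl)).
  exact (mk2 (A1 _ concatC (A2 _ (mapC _ H) (V 1) (V 0))) _ (fun _ _ => eq_refl)).
Defined.

Lemma compLc_ok a M : compLc (E a) (EL M) = EL (compL a M).
Proof.
  unfold compLc. change (EL M) with (lc (map EC M)). rewrite mapc_lc. unfold EL, compL. rewrite !map_map. f_equal.
  apply map_ext. intros D. unfold EC. rewrite mapc_lc, !map_map. reflexivity.
Qed.

Lemma mulcnfc_ok L M : mulcnfc (EL L) (EL M) = EL (mulcnf L M).
Proof.
  unfold mulcnfc. change (EL L) with (lc (map EC L)). rewrite mapc_lc, map_map.
  replace (map _ L) with (map lc (map (fun C => map EC (joinAll (map (fun a => compL a M) C))) L)).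
  - rewrite concatc_lc. unfold EL, mulcnf. rewrite map_flat_map', flat_map_concat. reflexivity.
  - rewrite map_map. apply map_ext. intros C. unfold EC at 2. rewrite mapc_lc, map_map.
    replace (map _ C) with (map EL (map (fun a => compL a M) C)).
    rewrite joinAllc_lc. reflexivity.
    rewrite map_map. apply map_ext. intros a. rewrite compLc_ok. reflexivity.
Qed.

Definition sing (z a : nat) := cons (cpair 4 a) 0.
Definition singC : C2 sing := mk2 (A2 _ consC (A2 _ cpairC (K 4) (V 1)) (K 0)) _ (fun _ _ => eq_refl).
Definition starc L := joinAllc (mapc (fun _ C => mapc sing 0 C) 0 L).
Definition starC : C1 starc.
Proof.
  pose (G := mk2 (A2 _ (mapC _ singC) (K 0) (V 1)) (fun _ C => mapc sing 0 C) (fun _ _ => eq_refl)).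
  exact (mk1 (A1 _ joinAllC (A2 _ (mapC _ G) (K 0) (V 0))) _ (fun _ => eq_refl)).
Defined.
Lemma starc_ok L : starc (EL L) = EL (starcnf L).
Proof.
  unfold starc. change (EL L) with (lc (map EC L)). rewrite mapc_lc, map_map.
  replace (map _ L) with (map EL (map (map (fun a => [TStar a])) L)).
  apply joinAllc_lc.
  rewrite map_map. apply map_ext. intros C. unfold EC. rewrite mapc_lc, map_map.
  unfold EL. rewrite map_map. reflexivity.
Qed.

Definition nf_H (n T z : nat) :=
  cond (fstc n) (cons (cons n 0) 0)
  (cond (fstc n - 1) (appc (lk n T (fstc (sndc n))) (lk n T (sndc (sndc n))))
  (cond (fstc n - 2) (prodc appc (lk n T (fstc (sndc n))) (lk n T (sndc (sndc n))))
  (cond (fstc n - 3) (mulcnfc (lk n T (fstc (sndc n))) (lk n T (sndc (sndc n))))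
  (cond (fstc n - 4) (starc (lk n T (sndc n))) (cons (cons n 0) 0))))).
Definition nfc n := covF nf_H n 0.
Definition nfC : C1 nfc.
Proof.
  pose (eA := A3 _ lkC (V 0) (V 1) (A1 _ fstC (A1 _ sndC (V 0)))).
  pose (eB := A3 _ lkC (V 0) (V 1) (A1 _ sndC (A1 _ sndC (V 0)))).
  pose (eR := A3 _ lkC (V 0) (V 1) (A1 _ sndC (V 0))).
  pose (eT := A1 _ fstC (V 0)).
  pose (eLL := A2 _ consC (A2 _ consC (V 0) (K 0)) (K 0)).
  pose (e := A3 _ condC eT eLL (A3 _ condC (A2 _ subC eT (K 1)) (A2 _ appC eA eB)
     (A3 _ condC (A2 _ subC eT (K 2)) (A2 _ (prodC _ appC) eA eB)
     (A3 _ condC (A2 _ subC eT (K 3)) (A2 _ mulcnfC eA eB)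
     (A3 _ condC (A2 _ subC eT (K 4)) (A1 _ starC eR) eLL))))).
  pose (HH := mk3 e nf_H (fun _ _ _ => eq_refl)).
  exact (mk1 (A2 _ (cov_C _ HH) (V 0) (K 0)) _ (fun _ => eq_refl)).
Defined.

Lemma lk_nf n m : m < n -> lk n (tbl nf_H n 0) m = nfc m.
Proof. apply tbl_lk. Qed.
Lemma nfc_unfold n : nfc n = nf_H n (tbl nf_H n 0) 0.
Proof. reflexivity. Qed.

Lemma lt_bin k a b : 0 < k -> a < cpair k (cpair a b).
Proof. intros. pose proof (cpair_ge_l a b). pose proof (cpair_gt_r k (cpair a b) H). lia. Qed.
Lemma lt_bin2 k a b : 0 < k -> b < cpair k (cpair a b).
Proof. intros. pose proof (cpair_ge_r a b). pose proof (cpair_gt_r k (cpair a b) H). lia. Qed.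

Lemma nfc_ok u : nfc (E u) = EL (nf u).
Proof.
  induction u; rewrite nfc_unfold; set (T := tbl nf_H _ 0); unfold nf_H.
  - change (E (TVar i)) with (cpair 0 i). rewrite fst_cpair. reflexivity.
  - change (E (TMeet u1 u2)) with (cpair 1 (cpair (E u1) (E u2))).
    rewrite !snd_cpair, !fst_cpair. cbn [cond Nat.sub].
    unfold T. rewrite (lk_nf _ (E u1)) by (apply lt_bin; lia). rewrite (lk_nf _ (E u2)) by (apply lt_bin2; lia).
    rewrite IHu1, IHu2. change (nf (TMeet u1 u2)) with (nf u1 ++ nf u2). unfold EL. rewrite appc_lc, map_app. reflexivity.
  - change (E (TJoin u1 u2)) with (cpair 2 (cpair (E u1) (E u2))).
    rewrite !snd_cpair, !fst_cpair. cbn [cond Nat.sub].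
    unfold T. rewrite (lk_nf _ (E u1)) by (apply lt_bin; lia). rewrite (lk_nf _ (E u2)) by (apply lt_bin2; lia).
    rewrite IHu1, IHu2. apply join2c.
  - change (E (TMul u1 u2)) with (cpair 3 (cpair (E u1) (E u2))).
    rewrite !snd_cpair, !fst_cpair. cbn [cond Nat.sub].
    unfold T. rewrite (lk_nf _ (E u1)) by (apply lt_bin; lia). rewrite (lk_nf _ (E u2)) by (apply lt_bin2; lia).
    rewrite IHu1, IHu2. apply mulcnfc_ok.
  - change (E (TStar u)) with (cpair 4 (E u)).
    rewrite !snd_cpair, !fst_cpair. cbn [cond Nat.sub].
    unfold T. rewrite (lk_nf _ (E u)) by (apply cpair_gt_r; lia).
    rewrite IHu. apply starc_ok.
  - change (E TOne) with (cpair 5 0). rewrite fst_cpair. cbn [cond Nat.sub]. reflexivity.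
Qed.

Lemma cond_cons a l x y : cond (cons a l) x y = y.
Proof. reflexivity. Qed.
Lemma lt_cons a l : l < cons a l.
Proof. unfold cons. pose proof (cpair_ge_r a l). lia. Qed.

Definition bj_H (q T z : nat) := cond (tail q) (head q) (cpair 2 (cpair (head q) (lk q T (tail q)))).
Definition bjc q := covF bj_H q 0.
Definition bjC : C1 bjc.
Proof.
  pose (HH := mk3 (A3 _ condC (A1 _ tailC (V 0)) (A1 _ headC (V 0))
     (A2 _ cpairC (K 2) (A2 _ cpairC (A1 _ headC (V 0)) (A3 _ lkC (V 0) (V 1) (A1 _ tailC (V 0))))))
     bj_H (fun _ _ _ => eq_refl)).
  exact (mk1 (A2 _ (cov_C _ HH) (V 0) (K 0)) _ (fun _ => eq_refl)).
Defined.
Lemma bjc_ok ts : forall t, bjc (lc (map E (t :: ts))) = E (bigjoin t ts).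
Proof.
  induction ts as [|t2 ts IH]; intros t; cbn [map lc]; unfold bjc at 1, covF at 1, bj_H at 1;
    rewrite head_cons, tail_cons.
  - reflexivity.
  - cbn [map lc] in *. rewrite cond_cons. rewrite tbl_lk by apply lt_cons.
    fold (bjc (cons (E t2) (lc (map E ts)))). rewrite IH. reflexivity.
Qed.

Definition len_H (q T z : nat) := cond q 0 (S (lk q T (tail q))).
Definition lenc q := covF len_H q 0.
Definition lenC : C1 lenc.
Proof.
  pose (HH := mk3 (A3 _ condC (V 0) (K 0) (A1 _ succC (A3 _ lkC (V 0) (V 1) (A1 _ tailC (V 0)))))
     len_H (fun _ _ _ => eq_refl)).
  exact (mk1 (A2 _ (cov_C _ HH) (V 0) (K 0)) _ (fun _ => eq_refl)).
Defined.
Lemma lenc_lc l : lenc (lc l) = length l.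
Proof.
  induction l; cbn [lc length]. reflexivity.
  unfold lenc at 1, covF at 1, len_H at 1. rewrite cond_cons, tail_cons, tbl_lk by apply lt_cons.
  fold (lenc (lc l)). rewrite IHl. reflexivity.
Qed.

Lemma drop_0 k : drop k 0 = 0.
Proof. induction k; simpl; auto. rewrite IHk. reflexivity. Qed.
Lemma nthc_lc l : forall k, nthc k (lc l) = nth k l 0.
Proof.
  induction l; intros k; cbn [lc].
  - unfold nthc. rewrite drop_0. destruct k; reflexivity.
  - destruct k. apply nthc_cons0. rewrite nthc_consS. apply IHl.
Qed.

Lemma enc_list_lc l : enc_list l = lc (map E l).
Proof. induction l; simpl; auto. rewrite IHl. reflexivity. Qed.

Lemma meet_one_ok T : W_models_le TOne T <-> W_models_eq (TMeet TOne T) TOne.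
Proof.
  split; intros H sigma Hs x; specialize (H sigma Hs x); simpl in *.
  - revert H. generalize (teval sigma T x). intros; omsolve; try discriminate; injection H; lia.
  - revert H. generalize (teval sigma T x). intros; omsolve; try discriminate; injection H; lia.
Qed.

Definition g1 n := cpair (cpair 1 (cpair (cpair 5 0) (bjc (S n)))) (cpair 5 0).
Definition g1C : C1 g1 :=
  mk1 (A2 _ cpairC (A2 _ cpairC (K 1) (A2 _ cpairC (K (cpair 5 0)) (A1 _ bjC (A1 _ succC (V 0))))) (K (cpair 5 0)))
    _ (fun _ => eq_refl).

Lemma g1_ok l : g1 (enc_nelist l) = enc_eqn (TMeet TOne (bigjoin (fst l) (snd l)), TOne).
Proof.
  destruct l as [t ts]. unfold g1, enc_nelist, enc_eqn. cbn [fst snd].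
  change (S (cpair (enc_term t) (enc_list ts))) with (cons (E t) (enc_list ts)).
  rewrite enc_list_lc. change (cons (E t) (lc (map E ts))) with (lc (map E (t :: ts))).
  rewrite bjc_ok. reflexivity.
Qed.

Definition Xc n := cpair 1 (cpair (cpair 4 (cpair 3 (cpair (cpair 4 (sndc n)) (fstc n))))
                                  (cpair 4 (cpair 3 (cpair (cpair 4 (fstc n)) (sndc n))))).
Definition Lf n := nfc (Xc n).
Definition LfC : C1 Lf.
Proof.
  pose (c4 := fun e => A2 _ cpairC (K 4) e). pose (c3 := fun e1 e2 => A2 _ cpairC (K 3) (A2 _ cpairC e1 e2)).
  pose (eF := A1 _ fstC (V 0)). pose (eS := A1 _ sndC (V 0)).
  exact (mk1 (A1 _ nfC (A2 _ cpairC (K 1) (A2 _ cpairC (c4 (c3 (c4 eS) eF)) (c4 (c3 (c4 eF) eS))))) _ (fun _ => eq_refl)).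
Defined.
Definition lenLC : C1 (fun n => lenc (Lf n)) := mk1 (A1 _ lenC (A1 _ LfC (V 0))) _ (fun _ => eq_refl).
Definition qC : C2 (fun k L => Nat.pred (nthc k L)) := mk2 (A1 _ predC (A2 _ nthcC (V 0) (V 1))) _ (fun _ _ => eq_refl).

Lemma Xc_ok s t : Xc (enc_eqn (s, t)) = E (Xterm s t).
Proof. unfold Xc, enc_eqn. cbn [fst snd]. rewrite fst_cpair, snd_cpair. reflexivity. Qed.

Definition stepP (c : recf) := RComp (proj1_sig mulC)
  [RProj 1; RComp c [RComp (proj1_sig qC) [RProj 0; RProj 2]]].
Definition progP (c : recf) := RComp (RPrec (kc 1) (stepP c)) [proj1_sig lenLC; proj1_sig LfC].

Definition Qc (C : list term) := W_models_le TOne (bigjoin (hd TOne C) (tl C)).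

Lemma nth_map_EC Cs k : nth k (map EC Cs) 0 = EC (nth k Cs []).
Proof. revert k; induction Cs; intros [|k]; simpl; auto. Qed.

Lemma loop_ok (c : recf) Cs :
  (forall x : term * list term, Forall is_basic (fst x :: snd x) ->
     (W_models_le TOne (bigjoin (fst x) (snd x)) -> reval c [enc_nelist x] 1) /\
     (~ W_models_le TOne (bigjoin (fst x) (snd x)) -> reval c [enc_nelist x] 0)) ->
  (forall C, In C Cs -> goodC C) ->
  forall k, k <= length Cs -> exists y, reval (RPrec (kc 1) (stepP c)) [k; EL Cs] y /\
     (y = 1 <-> forall i, i < k -> Qc (nth i Cs [])) /\ (y = 0 \/ y = 1).
Proof.
  intros Hc HG k. induction k; intros Hk.
  - exists 1. split. apply ev_prec0, kc_ok. split; [split; [intros _ i Hi; lia|auto]|right; reflexivity].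
  - destruct IHk as [y [Hy1 [Hy2 Hy3]]]. lia.
    set (C := nth k Cs []).
    assert (HC : In C Cs) by (apply nth_In; lia).
    destruct (HG C HC) as [Hne Hb]. destruct C as [|a r] eqn:EC0; [congruence|].
    assert (Hq : Nat.pred (nthc k (EL Cs)) = enc_nelist (a, r)).
    { unfold EL. rewrite nthc_lc, nth_map_EC. fold C. rewrite EC0. unfold EC. cbn [map lc].
      unfold enc_nelist. cbn [fst snd]. rewrite enc_list_lc. reflexivity. }
    assert (Hba : Forall is_basic (fst (a, r) :: snd (a, r))).
    { apply Forall_forall. intros t Ht. apply Hb. auto. }
    destruct (Hc _ Hba) as [Hc1 Hc2].
    assert (exists b, reval c [enc_nelist (a, r)] b /\ (b = 1 <-> Qc C) /\ (b = 0 \/ b = 1)) as [b [Hb1 [Hb2 Hb3]]].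
    { rewrite EC0. unfold Qc. cbn [hd tl]. destruct (classic (W_models_le TOne (bigjoin a r))) as [HQ|HQ].
      - exists 1. split; auto. split; [tauto|right; reflexivity].
      - exists 0. split; auto. split; [split; [lia|tauto]|left; reflexivity]. }
    exists (y * b). split.
    + eapply ev_precS. apply Hy1. unfold stepP. eapply ev_comp; [|apply (proj2_sig mulC)].
      apply evs_cons. apply ev_proj. apply evs_cons; [|apply evs_nil].
      eapply ev_comp; [|rewrite <- Hq in Hb1; apply Hb1].
      apply evs_cons; [|apply evs_nil]. eapply ev_comp; [|apply (proj2_sig qC)].
      apply evs_cons. apply ev_proj. apply evs_cons. apply ev_proj. apply evs_nil.
    + split.
      * split.
        -- intros Hyb i Hi. assert (y = 1 /\ b = 1) as [Hy Hb'] by (destruct Hy3, Hb3; subst; lia).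
           destruct (Nat.eq_dec i k) as [->|Hik]. fold C. apply Hb2; auto. apply Hy2; auto. lia.
        -- intros HQ. assert (y = 1) by (apply Hy2; intros; apply HQ; lia).
           assert (b = 1) by (apply Hb2; fold C; apply HQ; lia). subst; auto.
      * destruct Hy3, Hb3; subst; simpl; auto.
Qed.

Lemma Lf_ok s t : Lf (enc_eqn (s, t)) = EL (nf (Xterm s t)).
Proof. unfold Lf. rewrite Xc_ok. apply nfc_ok. Qed.

Theorem proposition3p1 :
  comp_decidable enc_eqn (fun _ => True)
      (fun e : term * term => W_models_eq (fst e) (snd e))
  <->
  comp_decidable enc_nelist
      (fun l : term * list term => Forall is_basic (fst l :: snd l))
      (fun l => W_models_le TOne (bigjoin (fst l) (snd l))).
Proof.
  split.
  - intros [c Hc]. exists (RComp c [proj1_sig g1C]). intros l Hl.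
    destruct (Hc (TMeet TOne (bigjoin (fst l) (snd l)), TOne) I) as [H1 H2].
    split; intros HP.
    + eapply ev_comp. apply evs_cons; [apply (proj2_sig g1C)|apply evs_nil].
      rewrite g1_ok. apply H1. simpl. apply meet_one_ok; auto.
    + eapply ev_comp. apply evs_cons; [apply (proj2_sig g1C)|apply evs_nil].
      rewrite g1_ok. apply H2. simpl. intros HH. apply HP. apply meet_one_ok; auto.
  - intros [c Hc]. exists (progP c). intros [s t] _. cbn [fst snd].
    set (Cs := nf (Xterm s t)).
    destruct (loop_ok c Cs Hc (proj2 (good_nf _)) (length Cs) (le_n _)) as [y [Hy1 [Hy2 Hy3]]].
    assert (Hr : reval (progP c) [enc_eqn (s, t)] y).
    { unfold progP. eapply ev_comp.
      - apply evs_cons. apply (proj2_sig lenLC). apply evs_cons. apply (proj2_sig LfC). apply evs_nil.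
      - cbn beta. rewrite Lf_ok. fold Cs. unfold EL at 1. rewrite lenc_lc, length_map. exact Hy1. }
    assert (Heq : y = 1 <-> W_models_eq s t).
    { rewrite Hy2, X_ok, valid_nf. fold Cs. split.
      - intros H C HC. destruct (In_nth _ _ [] HC) as [i [Hi <-]]. apply H; auto.
      - intros H i Hi. apply H. apply nth_In; auto. }
    split; intros HP.
    + assert (y = 1) as <- by (apply Heq; auto). exact Hr.
    + destruct Hy3 as [Hy0|Hy0]; subst y. exact Hr. exfalso; apply HP, Heq; auto.
Qed.
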